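(* Assume that for every $y\in\mathcal Y$ the map $u\mapsto\ell(y,u)$ is convex and $\rho$-Lipschitz continuous for some constant $\rho\in(0,\infty)$, and that for every $y\in\mathcal Y$ the map $u\mapsto s(y,u)$ is $\gamma$-Lipschitz continuous for some constant $\gamma\in(0,\infty)$. Then for every $y\in\mathcal Y$, $$|S_{\lambda;D^y}(X_i,Y_i)-\tilde S_{\lambda;D^y}(X_i,Y_i)|\le\tau^{(0)}_{\lambda;i}\ \ (1\le i\le n),\qquad |S_{\lambda;D^y}(X_{n+1},y)-\tilde S_{\lambda;D^y}(X_{n+1},y)|\le\tau^{(0)}_{\lambda;n+1},$$ where for every $i\in\{1,\dots,n+1\}$, $\tau^{(0)}_{\lambda;i}=\sqrt{K_{i,i}}\sqrt{K_{n+1,n+1}}\,\frac{\gamma\rho}{\lambda(n+1)}$.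
   Context: Let $\mathcal X\subset\mathbb R^d$, $\mathcal Y\subset\mathbb R$, $D=\{(X_1,Y_1),\dots,(X_n,Y_n)\}$ i.i.d. with distribution $P$ on $\mathcal X\times\mathcal Y$, and $(X_{n+1},Y_{n+1})\sim P$ independent of $D$. For $y\in\mathcal Y$, $D^y=D\cup\{(X_{n+1},y)\}$. Let $\mathcal H$ be a reproducing kernel Hilbert space of functions $\mathcal X\to\mathbb R$ with kernel $\kappa_{\mathcal H}$, norm $\|\cdot\|_{\mathcal H}$, and let $K=(\kappa_{\mathcal H}(X_i,X_j))_{1\le i,j\le n+1}$ be the Gram matrix, with diagonal entries $K_{i,i}=\kappa_{\mathcal H}(X_i,X_i)$. Let $\ell:\mathcal Y\times\mathcal Y\to\mathbb R$ be a loss and $\lambda>0$. For $y\in\mathcal Y$, $\hat f_{\lambda;D^y}$ denotes the minimizer over $f\in\mathcal H$ of $\frac{1}{n+1}\sum_{(x,y')\in D^y}\ell(y',f(x))+\lambda\|f\|_{\mathcal H}^2$. Given a non-conformity function $s:\mathcal Y\times\mathcal Y\to\mathbb R_+$, the scores are $S_{\lambda;D^y}(X_i,Y_i)=s(Y_i,\hat f_{\lambda;D^y}(X_i))$ for $i\le n$ and $S_{\lambda;D^y}(X_{n+1},y)=s(y,\hat f_{\lambda;D^y}(X_{n+1}))$. Fix $z\in\mathcal Y$; the approximate scores are $\tilde S_{\lambda;D^y}(X_i,Y_i)=s(Y_i,\hat f_{\lambda;D^z}(X_i))$ for $i\le n$ and $\tilde S_{\lambda;D^y}(X_{n+1},y)=s(y,\hat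 f_{\lambda;D^z}(X_{n+1}))$. *)

(* Defs.v *)
From mathcomp Require Import all_boot all_order all_algebra.
From mathcomp Require Import reals.
Set Implicit Arguments. Unset Strict Implicit. Unset Printing Implicit Defensive.
Import Order.TTheory GRing.Theory Num.Theory.
Local Open Scope ring_scope.

Section RKHS.
Variables (R : realType) (T : Type) (H : lmodType R).

Definition ip_norm (ip : H -> H -> R) (f : H) : R := Num.sqrt (ip f f).

Definition is_hilbert (ip : H -> H -> R) : Prop :=
  [/\ (forall a f g h, ip (a *: f + g) h = a * ip f h + ip g h),
      (forall f g, ip f g = ip g f),
      (forall f, 0 <= ip f f),
      (forall f, ip f f = 0 -> f = 0) &
      (forall u : nat -> H,
         (forall e : R, 0 < e -> exists N : nat, forall m k : nat,
             (N <= m)%N -> (N <= k)%N -> ip_norm ip (u m - u k) < e) ->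
         exists l : H, forall e : R, 0 < e -> exists N : nat, forall m : nat,
             (N <= m)%N -> ip_norm ip (u m - l) < e)].

(* H is a reproducing kernel Hilbert space of functions T -> R:
   ev f is the function represented by f (evaluation map, injective so that
   H is a space of functions), and kfeat x = kappa(x, .) is the representer of
   evaluation at x (reproducing property). *)
Definition is_RKHS (ip : H -> H -> R) (ev : H -> T -> R) (kfeat : T -> H) : Prop :=
  [/\ is_hilbert ip,
      (forall f g, (forall x, ev f x = ev g x) -> f = g) &
      (forall f x, ev f x = ip f (kfeat x))].

Definition rkernel (ip : H -> H -> R) (kfeat : T -> H) (x x' : T) : R :=
  ip (kfeat x) (kfeat x').

End RKHS.

(* Gram matrix K = (kappa(X_i, X_j))_{1 <= i,j <= n+1}, indices 'I_n.+1,
   ord_max being the index n+1. *)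
Definition gram (R : realType) (T : Type) (H : lmodType R)
  (ip : H -> H -> R) (kfeat : T -> H) (n : nat) (Xs : 'I_n.+1 -> T)
  : 'M[R]_n.+1 := \matrix_(i, j) rkernel ip kfeat (Xs i) (Xs j).

(* labels of the augmented data set D^w: Y_i for i <= n, w for index n+1 *)
Definition aug_labels (R : realType) (n : nat) (Ys : 'I_n -> R) (w : R)
  (i : 'I_n.+1) : R := oapp Ys w (unlift ord_max i).

Definition reg_risk (R : realType) (T : Type) (H : lmodType R)
  (ip : H -> H -> R) (ev : H -> T -> R) (l : R -> R -> R) (lambda : R)
  (n : nat) (Xs : 'I_n.+1 -> T) (Ys : 'I_n -> R) (w : R) (f : H) : R :=
  (n.+1%:R)^-1 * (\sum_(i < n.+1) l (aug_labels Ys w i) (ev f (Xs i)))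
  + lambda * (ip_norm ip f) ^+ 2.

(* Main.v *)
Require Import Defs.
From mathcomp Require Import all_boot all_order all_algebra.
From mathcomp Require Import reals ring lra.
Import Order.TTheory GRing.Theory Num.Theory.
Local Open Scope ring_scope.

Lemma ip0l (R : realType) (H : lmodType R) (ip : H -> H -> R)
  (Hlin : forall a f g h, ip (a *: f + g) h = a * ip f h + ip g h) h :
  ip 0 h = 0.
Proof.
  have := Hlin (-1) 0 0 h; rewrite scaler0 addr0.
  move=> E; have : ip 0 h * 2 = 0 by rewrite -[LHS]addr0 {1}E; ring.
  by move/eqP; rewrite mulf_eq0 pnatr_eq0 orbF => /eqP.
Qed.

Lemma ipZl (R : realType) (H : lmodType R) (ip : H -> H -> R)
  (Hlin : forall a f g h, ip (a *: f + g) h = a * ip f h + ip g h) a f h :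
  ip (a *: f) h = a * ip f h.
Proof.
by have := Hlin a f 0 h; rewrite addr0 ip0l // addr0.
Qed.

Lemma ipDl (R : realType) (H : lmodType R) (ip : H -> H -> R)
  (Hlin : forall a f g h, ip (a *: f + g) h = a * ip f h + ip g h) f g h :
  ip (f + g) h = ip f h + ip g h.
Proof. by have := Hlin 1 f g h; rewrite scale1r mul1r. Qed.

Lemma ipBl (R : realType) (H : lmodType R) (ip : H -> H -> R)
  (Hlin : forall a f g h, ip (a *: f + g) h = a * ip f h + ip g h) f g h :
  ip (f - g) h = ip f h - ip g h.
Proof. by have := Hlin (-1) g f h; rewrite scaleN1r addrC => ->; ring. Qed.

Lemma ipBr (R : realType) (H : lmodType R) (ip : H -> H -> R)
  (Hlin : forall a f g h, ip (a *: f + g) h = a * ip f h + ip g h)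
  (Hsym : forall f g, ip f g = ip g f) f g h :
  ip h (f - g) = ip h f - ip h g.
Proof. by rewrite Hsym ipBl // Hsym (Hsym g). Qed.

Lemma ipZr (R : realType) (H : lmodType R) (ip : H -> H -> R)
  (Hlin : forall a f g h, ip (a *: f + g) h = a * ip f h + ip g h)
  (Hsym : forall f g, ip f g = ip g f) a f h :
  ip h (a *: f) = a * ip h f.
Proof. by rewrite Hsym ipZl // Hsym. Qed.

Lemma ipCS (R : realType) (H : lmodType R) (ip : H -> H -> R)
  (Hlin : forall a f g h, ip (a *: f + g) h = a * ip f h + ip g h)
  (Hsym : forall f g, ip f g = ip g f)
  (Hpos : forall f, 0 <= ip f f)
  (Hdef : forall f, ip f f = 0 -> f = 0) f g :
  `|ip f g| <= Num.sqrt (ip f f) * Num.sqrt (ip g g).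
Proof.
have [c0|cn0] := eqVneq (ip g g) 0.
  have -> : g = 0 by apply: Hdef.
  rewrite Hsym ip0l // normr0.
  by rewrite mulr_ge0 // sqrtr_ge0.
have cp : 0 < ip g g by rewrite lt_def cn0 Hpos.
set a := ip f f; set b := ip f g; set c := ip g g.
have key : 0 <= a - b ^+ 2 / c.
  have := Hpos (f - (b / c) *: g).
  rewrite ipBl // !ipBr // !ipZl // !ipZr // (Hsym g f) -/a -/b -/c.
  move=> h; apply: le_trans h _; rewrite le_eqVlt; apply/orP; left; apply/eqP.
  by field; rewrite lt0r_neq0.
have : b ^+ 2 <= a * c.
  have : b ^+ 2 / c <= a by lra.
  by rewrite ler_pdivrMr.
move=> h; rewrite -sqrtr_sqr -sqrtrM ?Hpos //; exact: ler_wsqrtr.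
Qed.

Lemma ipDr (R : realType) (H : lmodType R) (ip : H -> H -> R)
  (Hlin : forall a f g h, ip (a *: f + g) h = a * ip f h + ip g h)
  (Hsym : forall f g, ip f g = ip g f) f g h :
  ip h (f + g) = ip h f + ip h g.
Proof. by rewrite Hsym ipDl // Hsym (Hsym g). Qed.

Lemma limit_arg (R : realType) (A B : R) :
  0 <= B -> (forall t, 0 < t <= 1 -> (1 - t) * B <= A) -> B <= A.
Proof.
move=> B0 Ht.
have A0 : 0 <= A by have := Ht 1; rewrite ltr01 lexx subrr mul0r; apply.
rewrite leNgt; apply/negP => AB.
have Bp : 0 < B by apply: le_lt_trans AB.
have := Ht ((B - A) / (2 * B)).
have -> : (1 - (B - A) / (2 * B)) * B = (A + B) / 2.
  by field; rewrite lt0r_neq0.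
have h1 : 0 < (B - A) / (2 * B) by rewrite divr_gt0 // ?subr_gt0 // mulr_gt0.
have h2 : (B - A) / (2 * B) <= 1.
  by rewrite ler_pdivrMr ?mulr_gt0 // mul1r; lra.
rewrite h1 h2 => /(_ isT); lra.
Qed.

Lemma strong (R : realType) (T : Type) (H : lmodType R) (ip : H -> H -> R)
  (ev : H -> T -> R) (kfeat : T -> H) (HR : is_RKHS ip ev kfeat)
  (n : nat) (Xs : 'I_n.+1 -> T) (Ys : 'I_n -> R) (l : R -> R -> R)
  (lambda : R) (Hlam : 0 < lambda) (w : R)
  (Hconv : forall i (a b t : R), 0 <= t <= 1 ->
      l (aug_labels Ys w i) (t * a + (1 - t) * b)
      <= t * l (aug_labels Ys w i) a + (1 - t) * l (aug_labels Ys w i) b)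
  (fw : H) (Hmin : forall g, reg_risk ip ev l lambda Xs Ys w fw <= reg_risk ip ev l lambda Xs Ys w g)
  (g : H) :
  lambda * ip (g - fw) (g - fw) <=
  reg_risk ip ev l lambda Xs Ys w g - reg_risk ip ev l lambda Xs Ys w fw.
Proof.
case: HR => [[Hlin Hsym Hpos Hdef _] _ Hev].
set Rk := reg_risk ip ev l lambda Xs Ys w.
set D := ip (g - fw) (g - fw).
have nrm : forall f, ip_norm ip f ^+ 2 = ip f f by move=> f; rewrite sqr_sqrtr.
have claim : forall t, 0 <= t <= 1 ->
    Rk (t *: g + (1 - t) *: fw) <= t * Rk g + (1 - t) * Rk fw - lambda * (t * (1 - t) * D).
  move=> t /andP[t0 t1].
  rewrite /Rk /reg_risk !nrm.
  set c := (n.+1%:R)^-1.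
  have c0 : 0 <= c by rewrite invr_ge0.
  set Sh := \sum_(i < n.+1) _.
  set Sg := \sum_(i < n.+1) _.
  set Sf := \sum_(i < n.+1) _.
  have HS : Sh <= t * Sg + (1 - t) * Sf.
    rewrite /Sh /Sg /Sf !mulr_sumr -big_split /=; apply: ler_sum => i _.
    rewrite !Hev ipDl // !ipZl // -!Hev; apply: Hconv; lra.
  have HN : ip (t *: g + (1 - t) *: fw) (t *: g + (1 - t) *: fw)
      = t * ip g g + (1 - t) * ip fw fw - t * (1 - t) * D.
    rewrite /D ipBl // !ipBr // ipDl // !ipDr // !ipZl // !ipZr // (Hsym fw g); ring.
  rewrite HN.
  apply: (@le_trans _ _ (c * (t * Sg + (1 - t) * Sf) +
      lambda * (t * ip g g + (1 - t) * ip fw fw - t * (1 - t) * D))).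
    by rewrite lerD2r ler_wpM2l.
  by rewrite le_eqVlt; apply/orP; left; apply/eqP; ring.
apply: limit_arg.
  by apply: mulr_ge0; [exact: ltW | exact: Hpos].
move=> t /andP[t0 t1].
have := Hmin (t *: g + (1 - t) *: fw).
have := claim t; rewrite (ltW t0) t1 => /(_ isT) h1 h2.
have h3 : t * ((1 - t) * (lambda * D)) <= t * (Rk g - Rk fw).
  have := le_trans h2 h1.
  move=> h; rewrite -subr_ge0; rewrite -subr_ge0 in h.
  by have -> : t * (Rk g - Rk fw) - t * ((1 - t) * (lambda * D)) =
     t * Rk g + (1 - t) * Rk fw - lambda * (t * (1 - t) * D) - Rk fw by ring.
by rewrite ler_pM2l in h3.
Qed.

Lemma aug_widen (R : realType) (n : nat) (Ys : 'I_n -> R) (w : R) (i : 'I_n) :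
  aug_labels Ys w (widen_ord (leqnSn n) i) = Ys i.
Proof.
rewrite /aug_labels.
have -> : widen_ord (leqnSn n) i = lift ord_max i by apply: ord_inj; rewrite lift_max.
by rewrite liftK.
Qed.

Lemma aug_max (R : realType) (n : nat) (Ys : 'I_n -> R) (w : R) :
  aug_labels Ys w ord_max = w.
Proof. by rewrite /aug_labels unlift_none. Qed.

Theorem theorem8 (R : realType) (d n : nat)
  (Xset : 'rV[R]_d -> Prop) (Yset : R -> Prop)
  (H : lmodType R) (ip : H -> H -> R)
  (ev : H -> {x : 'rV[R]_d | Xset x} -> R) (kfeat : {x : 'rV[R]_d | Xset x} -> H)
  (HRKHS : is_RKHS ip ev kfeat)
  (Xs : 'I_n.+1 -> {x : 'rV[R]_d | Xset x}) (Ys : 'I_n -> R)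
  (HYs : forall i, Yset (Ys i))
  (l : R -> R -> R) (s : R -> R -> R) (lambda rho gamma : R)
  (Hlambda : 0 < lambda) (Hrho : 0 < rho) (Hgamma : 0 < gamma)
  (Hl_convex : forall y, Yset y -> forall (a b t : R), 0 <= t <= 1 ->
      l y (t * a + (1 - t) * b) <= t * l y a + (1 - t) * l y b)
  (Hl_lip : forall y, Yset y -> forall a b : R, `|l y a - l y b| <= rho * `|a - b|)
  (Hs_nonneg : forall y u, Yset y -> 0 <= s y u)
  (Hs_lip : forall y, Yset y -> forall a b : R, `|s y a - s y b| <= gamma * `|a - b|)
  (fhat : R -> H)
  (Hfhat : forall w, Yset w -> forall g : H,
      reg_risk ip ev l lambda Xs Ys w (fhat w) <= reg_risk ip ev l lambda Xs Ys w g)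
  (z : R) (Hz : Yset z) :
  let K := gram ip kfeat Xs in
  let tau0 := fun i : 'I_n.+1 =>
    Num.sqrt (K i i) * Num.sqrt (K ord_max ord_max) * (gamma * rho / (lambda * n.+1%:R)) in
  forall y, Yset y ->
    (forall i : 'I_n,
       `|s (Ys i) (ev (fhat y) (Xs (widen_ord (leqnSn n) i)))
         - s (Ys i) (ev (fhat z) (Xs (widen_ord (leqnSn n) i)))|
       <= tau0 (widen_ord (leqnSn n) i)) /\
    `|s y (ev (fhat y) (Xs ord_max)) - s y (ev (fhat z) (Xs ord_max))| <= tau0 ord_max.
Proof.
move=> K tau0 y Hy.
case: (HRKHS) => [[Hlin Hsym Hpos Hdef _] _ Hev].
have Haug : forall w, Yset w -> forall i, Yset (aug_labels Ys w i).
  by move=> w Hw i; rewrite /aug_labels; case: (unlift _ _) => /=.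
have Hconv : forall w, Yset w -> forall i (a b t : R), 0 <= t <= 1 ->
      l (aug_labels Ys w i) (t * a + (1 - t) * b)
      <= t * l (aug_labels Ys w i) a + (1 - t) * l (aug_labels Ys w i) b.
  by move=> w Hw i; apply: Hl_convex; apply: Haug.
have Sy := @strong _ _ _ _ _ _ HRKHS _ Xs Ys l _ Hlambda _ (Hconv y Hy) _ (Hfhat y Hy) (fhat z).
have Sz := @strong _ _ _ _ _ _ HRKHS _ Xs Ys l _ Hlambda _ (Hconv z Hz) _ (Hfhat z Hz) (fhat y).
set c := (n.+1%:R : R)^-1.
have cp : 0 < c by rewrite invr_gt0 ltr0n.
have Hdiff : forall f, reg_risk ip ev l lambda Xs Ys y f - reg_risk ip ev l lambda Xs Ys z f
    = c * (l y (ev f (Xs ord_max)) - l z (ev f (Xs ord_max))).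
  move=> f; rewrite /reg_risk !big_ord_recr /= !aug_max.
  under eq_bigr => i _ do rewrite aug_widen.
  under [X in _ - (_ * (X + _) + _)]eq_bigr => i _ do rewrite aug_widen.
  rewrite -/c; ring.
move: Sy Sz; set fy := fhat y; set fz := fhat z.
set D := ip (fy - fz) (fy - fz).
have DD : ip (fz - fy) (fz - fy) = D.
  by rewrite /D !ipBl // !ipBr // (Hsym fz fy); ring.
rewrite DD => Sy Sz.
set x := Xs ord_max.
set k := Num.sqrt (ip (kfeat x) (kfeat x)).
set N := Num.sqrt D.
have D0 : 0 <= D by apply: Hpos.
have ND : N ^+ 2 = D by rewrite sqr_sqrtr.
have evD : forall j, `|ev fy j - ev fz j| <= N * Num.sqrt (ip (kfeat j) (kfeat j)).
  move=> j; rewrite !Hev -ipBl //; exact: ipCS.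
have key : 2 * lambda * D <= c * (2 * rho * `|ev fy x - ev fz x|).
  have h1 := Hdiff fz; have h2 := Hdiff fy.
  have l1 := Hl_lip y Hy (ev fz x) (ev fy x).
  have l2 := Hl_lip z Hz (ev fy x) (ev fz x).
  have ab : `|ev fz x - ev fy x| = `|ev fy x - ev fz x| by rewrite distrC.
  set a := ev fz x in h1 l1 l2 *; set b := ev fy x in h2 l1 l2 *.
  have e1 : l y a - l y b <= rho * `|b - a| by rewrite -ab; apply: le_trans (ler_norm _) l1.
  have e2 : l z b - l z a <= rho * `|b - a| by apply: le_trans (ler_norm _) l2.
  have : (l y a - l z a) - (l y b - l z b) <= 2 * rho * `|b - a| by lra.
  move=> e3.
  have := ler_wpM2l (ltW cp) e3.
  move: h1 h2 Sy Sz; set Ryz := reg_risk _ _ _ _ _ _ y fz; set Ryy := reg_risk _ _ _ _ _ _ y fy.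
  set Rzz := reg_risk _ _ _ _ _ _ z fz; set Rzy := reg_risk _ _ _ _ _ _ z fy.
  move=> h1 h2 Sy Sz e4.
  have : c * (l y a - l z a - (l y b - l z b)) = (Ryz - Rzz) - (Ryy - Rzy).
    by rewrite h1 h2; ring.
  move=> e5; rewrite e5 in e4; lra.
have kN : lambda * N <= c * rho * k.
  have h := le_trans key (ler_wpM2l (ltW cp) (ler_wpM2l _ (evD x))).
  have {h} h : lambda * N * N <= c * rho * k * N.
    have : 0 <= 2 * rho by rewrite mulr_ge0 // ltW.
    move/h; rewrite -ND.
    move=> h'; have : 2 * (lambda * N * N) <= 2 * (c * rho * k * N).
      rewrite -/k in h'.
      have E1 : 2 * (lambda * N * N) = 2 * lambda * N ^+ 2 by ring.
      have E2 : c * (2 * rho * (N * k)) = 2 * (c * rho * k * N) by ring.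
      by rewrite E1 -E2.
    by rewrite ler_pM2l.
  have [N0|Nn0] := eqVneq N 0.
    by rewrite N0 mulr0 mulr_ge0 ?sqrtr_ge0 // mulr_ge0 // ltW.
  have Np : 0 < N by rewrite lt_def Nn0 sqrtr_ge0.
  by rewrite ler_pM2r in h.
have Nb : N <= c * rho * k / lambda by rewrite ler_pdivlMr // mulrC.
have gen : forall (y' : R), Yset y' -> forall j : 'I_n.+1,
    `|s y' (ev fy (Xs j)) - s y' (ev fz (Xs j))| <= tau0 j.
  move=> y' Hy' j.
  set kj := Num.sqrt (ip (kfeat (Xs j)) (kfeat (Xs j))).
  have -> : tau0 j = gamma * (kj * (c * rho * k / lambda)).
    rewrite /tau0 /K /gram !mxE /rkernel -/kj -/x -/k /c.
    by field; rewrite lt0r_neq0 //= addrC natr1 pnatr_eq0.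
  apply: le_trans (Hs_lip y' Hy' _ _) _.
  apply: ler_wpM2l; first exact: ltW.
  apply: le_trans (evD (Xs j)) _; rewrite -/kj mulrC.
  by apply: ler_wpM2l; first exact: sqrtr_ge0.
split; last exact: gen.
by move=> i; apply: gen.
Qed.
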